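(* There exist a connected continuous-time interconnection $\Gamma=[\gamma_{ij}]\in\mathbb{R}^{p\times p}$ and a map $Q:\mathbb{R}\to\overline{\mathcal Q}_n$ satisfying $$\liminf_{T\to\infty}\frac1T\,\sigma_{\min}\Big(\int_0^TQ_t\,dt\Big)>0$$ such that the solutions $x_i(\cdot)$ of $\dot x_i=Q_t\sum_{j\ne i}\gamma_{ij}(x_j-x_i)$ do not synchronize (for some initial condition).
   Context: $\sigma_{\min}$ smallest singular value; $\overline{\mathcal Q}_n$ the set of symmetric positive semidefinite $n\times n$ matrices with induced 2-norm at most $1$. Continuous-time interconnection: $\gamma_{ij}\ge0$ ($i\ne j$), $\gamma_{ii}=-\sum_{j\ne i}\gamma_{ij}$; graph edge $(n_i,n_j)$ iff $\gamma_{ij}>0$; connected if some node is reachable by a directed path from every other node. Functions $x_i$ synchronize if there is $\bar x$ with $|x_i(t)-\bar x(t)|\to0$ as $t\to\infty$ for all $i$. *)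

(* Defs.v *)
From HB Require Import structures.
From mathcomp Require Import all_boot all_order all_algebra.
From mathcomp Require Import all_classical all_reals all_analysis.
Set Implicit Arguments. Unset Strict Implicit. Unset Printing Implicit Defensive.
Import Order.TTheory GRing.Theory Num.Theory.
Import numFieldNormedType.Exports.
Local Open Scope classical_set_scope.
Local Open Scope ring_scope.

Section Defs.
Variable R : realType.

Definition norm2 (n : nat) (v : 'cV[R]_n) : R := Num.sqrt (\sum_k (v k 0) ^+ 2).

Definition Qbar (n : nat) (A : 'M[R]_n) : Prop :=
  A^T = A /\
  (forall v : 'cV[R]_n, 0 <= (v^T *m A *m v) 0 0) /\
  (forall v : 'cV[R]_n, norm2 (A *m v) <= norm2 v).

Definition sigma_min (n : nat) (A : 'M[R]_n) : R :=
  inf [set norm2 (A *m v) | v in [set v : 'cV[R]_n | norm2 v = 1]].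

Definition mx_integral (n : nat) (Q : R -> 'M[R]_n) (a b : R) : 'M[R]_n :=
  \matrix_(i, j) Rintegral lebesgue_measure `[a, b] (fun t => Q t i j).

Definition interconnection (p : nat) (G : 'M[R]_p) : Prop :=
  (forall i j : 'I_p, i != j -> 0 <= G i j) /\
  (forall i : 'I_p, G i i = - \sum_(j | j != i) G i j).

Definition ic_edge (p : nat) (G : 'M[R]_p) : rel 'I_p :=
  fun i j => 0 < G i j.

Definition ic_connected (p : nat) (G : 'M[R]_p) : Prop :=
  exists r : 'I_p, forall i : 'I_p, connect (ic_edge G) i r.

Definition liminf_pos (f : R -> R) : Prop :=
  exists c : R, 0 < c /\ exists T0 : R, forall T, T0 <= T -> c <= f T.

Definition consensus_rhs (p n : nat) (G : 'M[R]_p) (Q : R -> 'M[R]_n)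
    (x : 'I_p -> R -> 'cV[R]_n) (i : 'I_p) (t : R) : 'cV[R]_n :=
  Q t *m (\sum_(j | j != i) G i j *: (x j t - x i t)).

(* x is a (Caratheodory / absolutely continuous) solution on [0, oo):
   x_i(t) = x_i(0) + int_0^t rhs_i(s) ds, the integrand being integrable. *)
Definition is_solution (p n : nat) (G : 'M[R]_p) (Q : R -> 'M[R]_n)
    (x : 'I_p -> R -> 'cV[R]_n) : Prop :=
  forall (i : 'I_p) (t : R), 0 <= t ->
    (forall k : 'I_n, lebesgue_measure.-integrable `[0, t]
        (fun s => (consensus_rhs G Q x i s k 0)%:E)) /\
    x i t = x i 0 + \col_k Rintegral lebesgue_measure `[0, t]
                       (fun s => consensus_rhs G Q x i s k 0).

Definition synchronize (p n : nat) (x : 'I_p -> R -> 'cV[R]_n) : Prop :=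
  exists xbar : R -> 'cV[R]_n,
    forall i : 'I_p, norm2 (x i t - xbar t) @[t --> +oo] --> 0.
End Defs.

(* Main.v *)
Require Import Defs.
From HB Require Import structures.
From mathcomp Require Import all_boot all_order all_algebra.
From mathcomp Require Import all_classical all_reals all_analysis.
From mathcomp Require Import ring lra.
Import Order.TTheory GRing.Theory Num.Theory.
Import numFieldNormedType.Exports.
Local Open Scope classical_set_scope.
Local Open Scope ring_scope.
Set Implicit Arguments. Unset Strict Implicit.

Section S.
Variable R : realType.
Implicit Types (f g F : R -> R) (x : R).
Notation mu := (@lebesgue_measure R).
Notation i0 := (@ord0 1).
Notation i1 := (@ord_max 1).

Lemma sum2 (f : 'I_2 -> R) : \sum_k f k = f i0 + f i1.
Proof. rewrite big_ord_recr big_ord1; congr (f _ + _); exact/val_inj. Qed.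
Lemma mulmx2 (A : 'M[R]_2) (v : 'cV[R]_2) i : (A *m v) i 0 = A i i0 * v i0 0 + A i i1 * v i1 0.
Proof. by rewrite mxE sum2. Qed.
Lemma quad2 (A : 'M[R]_2) (v : 'cV[R]_2) :
  (v^T *m A *m v) 0 0 = v i0 0 ^+ 2 * A i0 i0 + v i0 0 * v i1 0 * (A i0 i1 + A i1 i0) + v i1 0 ^+ 2 * A i1 i1.
Proof. rewrite mxE sum2 !mxE !sum2 !mxE. ring. Qed.
Lemma norm2_sq (v : 'cV[R]_2) : norm2 v ^+ 2 = v i0 0 ^+ 2 + v i1 0 ^+ 2.
Proof. rewrite /norm2 sqr_sqrtr; first exact: sum2. by apply: sumr_ge0 => i _; exact: sqr_ge0. Qed.
Lemma norm2_ge0 n (v : 'cV[R]_n) : 0 <= norm2 v.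
Proof. exact: sqrtr_ge0. Qed.
Lemma ord2 (i : 'I_2) : i = i0 \/ i = i1.
Proof. case: i => [[|[|m]] h]; [left|right|]; try exact/val_inj. by []. Qed.

Lemma dD f g x df dg : is_derive x 1 f df -> is_derive x 1 g dg ->
  is_derive x 1 (fun t => f t + g t) (df + dg).
Proof. move=> hf hg; exact: is_deriveD. Qed.
Lemma dB f g x df dg : is_derive x 1 f df -> is_derive x 1 g dg ->
  is_derive x 1 (fun t => f t - g t) (df - dg).
Proof. move=> hf hg; exact: is_deriveB. Qed.
Lemma dN f x df : is_derive x 1 f df -> is_derive x 1 (fun t => - f t) (- df).
Proof. move=> hf; exact: is_deriveN. Qed.
Lemma dM f g x df dg : is_derive x 1 f df -> is_derive x 1 g dg ->
  is_derive x 1 (fun t => f t * g t) (f x * dg + g x * df).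
Proof. move=> hf hg; exact: is_deriveM. Qed.
Lemma dX2 f x df : is_derive x 1 f df -> is_derive x 1 (fun t => f t ^+ 2) (2 * f x * df).
Proof. move=> hf; have h := dM hf hf. rewrite (_ : (fun t => f t ^+ 2) = fun t => f t * f t); last by apply/funext => t; rewrite expr2. apply: (is_derive_eq h). ring. Qed.
Lemma dcst x (c : R) : is_derive x 1 (fun _ => c) 0.
Proof. exact: is_derive_cst. Qed.
Lemma did x : is_derive x 1 (fun t : R => t) 1.
Proof. exact: is_derive_id. Qed.
Lemma dcos f x df : is_derive x 1 f df -> is_derive x 1 (fun t => cos (f t)) (- sin (f x) * df).
Proof. move=> hf; exact: (@is_derive1_comp _ cos f). Qed.
Lemma dsin f x df : is_derive x 1 f df -> is_derive x 1 (fun t => sin (f t)) (cos (f x) * df).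
Proof. move=> hf; exact: (@is_derive1_comp _ sin f). Qed.
Lemma dln f x df : 0 < f x -> is_derive x 1 f df -> is_derive x 1 (fun t => ln (f t)) ((f x)^-1 * df).
Proof. move=> fx hf; exact: (is_derive1_comp (is_derive1_ln fx) hf). Qed.
Lemma dV f x df : f x != 0 -> is_derive x 1 f df -> is_derive x 1 (fun t => (f t)^-1) (- (f x)^-2 * df).
Proof. move=> fx hf; exact: is_deriveV. Qed.

Lemma dcont f x df : is_derive x 1 f df -> {for x, continuous f}.
Proof. move=> [hd _]. exact/differentiable_continuous/derivable1_diffP. Qed.

Ltac dtac := first [ apply: dD | apply: dB | apply: dM | apply: dN | apply: dV
  | apply: dcos | apply: dsin | apply: dln | apply: dX2 | apply: dcst | apply: did ].

Lemma cont_int f T : (forall x, 0 <= x -> {for x, continuous f}) ->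
  mu.-integrable `[0, T] (EFin \o f).
Proof.
move=> cf; apply: continuous_compact_integrable; first exact: segment_compact.
apply: continuous_in_subspaceT => x; rewrite inE /= in_itv /= => /andP[x0 _].
exact: cf.
Qed.

Lemma FTC0 f F T : 0 <= T -> (forall x, 0 <= x -> is_derive x 1 F (f x)) ->
  (forall x, 0 <= x -> {for x, continuous f}) ->
  \int[mu]_(t in `[0, T]) f t = F T - F 0.
Proof.
move=> T0 dF cf; move: T0; rewrite le_eqVlt => /predU1P[<-|T0].
  by rewrite set_itv1 Rintegral_set1 subrr.
rewrite /Rintegral (@continuous_FTC2 _ _ F) //.
- apply: continuous_in_subspaceT => x; rewrite inE /= in_itv /= => /andP[x0 _].
  exact: cf.
- split.
  + move=> x; rewrite in_itv /= => /andP[x0 _]. by case: (dF x (ltW x0)).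
  + apply: cvg_at_right_filter; case: (dF 0 (lexx 0)) => h _.
    exact/differentiable_continuous/derivable1_diffP.
  + apply: cvg_at_left_filter; case: (dF T (ltW T0)) => h _.
    exact/differentiable_continuous/derivable1_diffP.
- move=> x; rewrite in_itv /= => /andP[x0 _].
  by rewrite derive1E; case: (dF x (ltW x0)) => _ ->.
Qed.

Definition rhoF (u : R) := u ^+ 2 / (1 + u).
Definition qa (c s u : R) := rhoF u * c ^+ 2 + s ^+ 2 / 2 + u / 2 * c * s.
Definition qb (c s u : R) := rhoF u * c * s - c * s / 2 - u / 4 * (c ^+ 2 - s ^+ 2).
Definition qc (c s u : R) := rhoF u * s ^+ 2 + c ^+ 2 / 2 - u / 2 * c * s.

Lemma rhoF_bnd (u : R) : 0 <= u <= 1 -> u ^+ 2 / 2 <= rhoF u /\ rhoF u <= 1 / 2.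
Proof.
move=> /andP[u0 u1]; have hp : 0 < 1 + u by lra.
rewrite /rhoF; split.
- rewrite ler_pdivlMr //. nra.
- rewrite ler_pdivrMr //. nra.
Qed.

Lemma core_psd (c s u a b : R) : 0 <= u <= 1 ->
  (- a * s + b * c) ^+ 2 / 4 <= a ^+ 2 * qa c s u + a * b * (qb c s u + qb c s u) + b ^+ 2 * qc c s u.
Proof.
move=> hu; have [h1 h2] := rhoF_bnd hu.
have -> : a ^+ 2 * qa c s u + a * b * (qb c s u + qb c s u) + b ^+ 2 * qc c s u
  = rhoF u * (a * c + b * s) ^+ 2 + (- a * s + b * c) ^+ 2 / 2 - u * (a * c + b * s) * (- a * s + b * c) / 2.
  by rewrite /qa /qb /qc; field.
move: (a * c + b * s) (- a * s + b * c) => al be.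
have h3 : 0 <= (rhoF u - u ^+ 2 / 2) * al ^+ 2.
  by apply: mulr_ge0; [lra | exact: sqr_ge0].
have h4 : 0 <= (u * al - be / 2) ^+ 2 by exact: sqr_ge0.
have h5 : 0 <= be ^+ 2 by exact: sqr_ge0.
nra.
Qed.

Lemma core_norm (c s u a b : R) : c ^+ 2 + s ^+ 2 = 1 -> 0 <= u <= 1 ->
  (qa c s u * a + qb c s u * b) ^+ 2 + (qb c s u * a + qc c s u * b) ^+ 2 <= a ^+ 2 + b ^+ 2.
Proof.
move=> hcs hu; have [h1 h2] := rhoF_bnd hu.
have -> : (qa c s u * a + qb c s u * b) ^+ 2 + (qb c s u * a + qc c s u * b) ^+ 2
  = ((rhoF u * (a * c + b * s) - u * (- a * s + b * c) / 4) ^+ 2 + ((- a * s + b * c) / 2 - u * (a * c + b * s) / 4) ^+ 2) * (c ^+ 2 + s ^+ 2).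
  by rewrite /qa /qb /qc; field.
have -> : a ^+ 2 + b ^+ 2 = ((a * c + b * s) ^+ 2 + (- a * s + b * c) ^+ 2).
  by rewrite -[a ^+ 2 + b ^+ 2]mulr1 -hcs; ring.
rewrite hcs !mulr1.
move: (a * c + b * s) (- a * s + b * c) => al be.
have : 0 <= rhoF u by nra.
move: hu => /andP[u0 u1] => r0.
have k1 : 0 <= (rhoF u * al + u * be / 4) ^+ 2 by exact: sqr_ge0.
have k2 : 0 <= (be / 2 + u * al / 4) ^+ 2 by exact: sqr_ge0.
have k3 : 0 <= (1 / 4 - rhoF u ^+ 2) * al ^+ 2 by apply: mulr_ge0; [nra | exact: sqr_ge0].
have k4 : 0 <= (1 - u ^+ 2) * al ^+ 2 by apply: mulr_ge0; [nra | exact: sqr_ge0].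
have k5 : 0 <= (1 - u ^+ 2) * be ^+ 2 by apply: mulr_ge0; [nra | exact: sqr_ge0].
have k6 : 0 <= al ^+ 2 by exact: sqr_ge0.
have k7 : 0 <= be ^+ 2 by exact: sqr_ge0.
nra.
Qed.

Definition uu (t : R) := (1 + t)^-1.
Definition th (t : R) := ln (1 + t) / 4.
Definition cs (t : R) := cos (th t).
Definition sn (t : R) := sin (th t).
Definition Qf (t : R) : 'M[R]_2 := \matrix_(i, j)
  if i == i0 then (if j == i0 then qa (cs t) (sn t) (uu t) else qb (cs t) (sn t) (uu t))
  else (if j == i0 then qb (cs t) (sn t) (uu t) else qc (cs t) (sn t) (uu t)).
Definition Qm (t : R) := Qf `|t|.

Lemma uu_bnd t : 0 <= t -> 0 <= uu t <= 1.
Proof.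
move=> t0; rewrite /uu invr_ge0 (_ : 0 <= 1 + t) /=; last lra.
rewrite invf_le1; lra.
Qed.
Lemma cs_sn t : cs t ^+ 2 + sn t ^+ 2 = 1.
Proof. by rewrite /cs /sn cos2sin2 subrK. Qed.

Lemma Qf00 t : Qf t i0 i0 = qa (cs t) (sn t) (uu t). Proof. by rewrite mxE. Qed.
Lemma Qf01 t : Qf t i0 i1 = qb (cs t) (sn t) (uu t). Proof. by rewrite mxE. Qed.
Lemma Qf10 t : Qf t i1 i0 = qb (cs t) (sn t) (uu t). Proof. by rewrite mxE. Qed.
Lemma Qf11 t : Qf t i1 i1 = qc (cs t) (sn t) (uu t). Proof. by rewrite mxE. Qed.

Lemma Qbar_Qf t : 0 <= t -> Qbar (Qf t).
Proof.
move=> t0; have hu := uu_bnd t0; split; [|split].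
- apply/matrixP => i j; rewrite mxE.
  by case: (ord2 i) => ->; case: (ord2 j) => ->; rewrite ?Qf00 ?Qf01 ?Qf10 ?Qf11.
- move=> v; rewrite quad2 Qf00 Qf01 Qf10 Qf11.
  apply: le_trans (core_psd _ _ _ _ hu).
  by apply: divr_ge0 => //; exact: sqr_ge0.
- move=> v; rewrite /norm2; apply: ler_wsqrtr; rewrite !sum2 !mulmx2.
  rewrite Qf00 Qf01 Qf10 Qf11; exact: core_norm (cs_sn t) hu.
Qed.

Lemma uupos (x : R) : -1 < x -> 0 < (1 + x)^-1.
Proof. move=> h; rewrite invr_gt0; lra. Qed.
Ltac dtac2 := lazymatch goal with
 | |- is_derive _ _ (fun t => @?f t + @?g t) _ => eapply (dD (f:=f) (g:=g))
 | |- is_derive _ _ (fun t => @?f t - @?g t) _ => eapply (dB (f:=f) (g:=g))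
 | |- is_derive _ _ (fun t => - @?f t) _ => eapply (dN (f:=f))
 | |- is_derive _ _ (fun t => @?f t * @?g t) _ => eapply (dM (f:=f) (g:=g))
 | |- is_derive _ _ (fun t => (@?f t)^-1) _ => eapply (dV (f:=f))
 | |- is_derive _ _ (fun t => cos (@?f t)) _ => eapply (dcos (f:=f))
 | |- is_derive _ _ (fun t => sin (@?f t)) _ => eapply (dsin (f:=f))
 | |- is_derive _ _ (fun t => ln (@?f t)) _ => eapply (dln (f:=f))
 | |- is_derive _ _ (fun t => (@?f t) ^+ 2) _ => eapply (dX2 (f:=f))
 | |- is_derive _ _ (fun t => t) _ => eapply did
 | |- is_derive _ _ (fun t => _) _ => eapply dcst
 end.
Ltac side h := have := uupos h; move=> ?; first [lra | (apply: lt0r_neq0; lra)].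

Lemma der_q (i j : 'I_2) (t : R) : -1 < t -> exists df : R, is_derive t 1 (fun x => Qf x i j) df.
Proof.
move=> ht.
have e : (fun x => Qf x i j) = if i == i0 then (if j == i0 then (fun x => qa (cs x) (sn x) (uu x)) else (fun x => qb (cs x) (sn x) (uu x)))
  else (if j == i0 then (fun x => qb (cs x) (sn x) (uu x)) else (fun x => qc (cs x) (sn x) (uu x))).
  by apply/funext => x; rewrite mxE; case: (i == i0); case: (j == i0).
rewrite e; case: (i == i0); case: (j == i0); eexists;
  rewrite /qa /qb /qc /cs /sn /th /uu /rhoF; repeat dtac2; side ht.
Qed.

Definition x0 (t : R) := (1 + uu t) * cs t.
Definition x1 (t : R) := (1 + uu t) * sn t.
Definition Xs (i : 'I_2) (t : R) : 'cV[R]_2 :=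
  if i == i0 then \col_k (if k == i0 then x0 t else x1 t) else 0.
Definition Gm : 'M[R]_2 := \matrix_(i, j) if i == i0 then (if j == i0 then -1 else 1) else 0.
Definition d0 (t : R) := - (qa (cs t) (sn t) (uu t) * x0 t + qb (cs t) (sn t) (uu t) * x1 t).
Definition d1 (t : R) := - (qb (cs t) (sn t) (uu t) * x0 t + qc (cs t) (sn t) (uu t) * x1 t).

Lemma d0E (t : R) : -1 < t -> d0 t = - (1 + uu t) * (rhoF (uu t) * cs t + uu t / 4 * sn t).
Proof.
move=> ht; have hu := uupos ht; have hcs := cs_sn t.
rewrite /d0 /x0 /x1.
transitivity (- (1 + uu t) * (cs t ^+ 2 + sn t ^+ 2) * (rhoF (uu t) * cs t + uu t / 4 * sn t)).
  by rewrite /qa /qb; field.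
by rewrite hcs mulr1.
Qed.
Lemma d1E (t : R) : -1 < t -> d1 t = - (1 + uu t) * (rhoF (uu t) * sn t - uu t / 4 * cs t).
Proof.
move=> ht; have hu := uupos ht; have hcs := cs_sn t.
rewrite /d1 /x0 /x1.
transitivity (- (1 + uu t) * (cs t ^+ 2 + sn t ^+ 2) * (rhoF (uu t) * sn t - uu t / 4 * cs t)).
  by rewrite /qb /qc; field.
by rewrite hcs mulr1.
Qed.

Lemma der_x0 (t : R) : -1 < t -> is_derive t 1 x0 (d0 t).
Proof.
move=> ht; rewrite d0E //; eapply is_derive_eq.
  rewrite /x0 /cs /sn /th /uu; repeat dtac2; side ht.
rewrite /rhoF /uu /cs /sn /th ?scaler0; have hu := uupos ht. field.
all: side ht.
Qed.

Lemma der_x1 (t : R) : -1 < t -> is_derive t 1 x1 (d1 t).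
Proof.
move=> ht; rewrite d1E //; eapply is_derive_eq.
  rewrite /x1 /cs /sn /th /uu; repeat dtac2; side ht.
rewrite /rhoF /uu /cs /sn /th ?scaler0; have hu := uupos ht. field.
all: side ht.
Qed.

Lemma cont_d0 (t : R) : -1 < t -> {for t, continuous d0}.
Proof.
move=> ht; have [df h] : exists df : R, is_derive t 1 d0 df.
  by eexists; rewrite /d0 /qa /qb /x0 /x1 /cs /sn /th /uu /rhoF; repeat dtac2; side ht.
exact: dcont h.
Qed.
Lemma cont_d1 (t : R) : -1 < t -> {for t, continuous d1}.
Proof.
move=> ht; have [df h] : exists df : R, is_derive t 1 d1 df.
  by eexists; rewrite /d1 /qc /qb /x0 /x1 /cs /sn /th /uu /rhoF; repeat dtac2; side ht.
exact: dcont h.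
Qed.

Lemma sum_neq (F : 'I_2 -> 'cV[R]_2) (i : 'I_2) :
  \sum_(j | j != i) F j = F (if i == i0 then i1 else i0).
Proof.
rewrite big_mkcond big_ord_recr big_ord1 /=.
by case: (ord2 i) => ->; rewrite /=; [rewrite add0r | rewrite addr0]; congr F; apply/val_inj.
Qed.

Lemma rhs0 (t : R) : 0 <= t -> forall k : 'I_2,
  consensus_rhs Gm Qm Xs i0 t k 0 = if k == i0 then d0 t else d1 t.
Proof.
move=> t0 k; rewrite /consensus_rhs sum_neq /= /Qm ger0_norm // mulmx2.
rewrite !mxE /Xs /=.
by case: (k == i0); rewrite /d0 /d1; ring.
Qed.

Lemma rhs1 (t : R) (k : 'I_2) : consensus_rhs Gm Qm Xs i1 t k 0 = 0.
Proof.
rewrite /consensus_rhs sum_neq /= (_ : Gm i1 i0 = 0); last by rewrite mxE.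
by rewrite scale0r mulmx0 mxE.
Qed.

Lemma Xs0E (t : R) (k : 'I_2) : Xs i0 t k 0 = if k == i0 then x0 t else x1 t.
Proof. by rewrite /Xs /= mxE. Qed.
Lemma Xs1E (t : R) : Xs i1 t = 0.
Proof. by []. Qed.

Lemma sol : is_solution Gm Qm Xs.
Proof.
move=> i t t0; case: (ord2 i) => ->.
- have hint : forall k : 'I_2, mu.-integrable `[0, t] (EFin \o (if k == i0 then d0 else d1)).
    move=> k; apply: cont_int => x x0'; case: (k == i0).
    + by apply: cont_d0; lra.
    + by apply: cont_d1; lra.
  have heq : forall k : 'I_2, {in `[0, t]%classic, (if k == i0 then d0 else d1) =1 (fun s => consensus_rhs Gm Qm Xs i0 s k 0)}.
    move=> k x; rewrite inE /= in_itv /= => /andP[x0' _].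
    by rewrite rhs0 //; case: (k == i0).
  split.
  + move=> k; apply: (eq_integrable _ _ _ _ (hint k)) => //.
    move=> x; rewrite inE /= in_itv /= => /andP[x0' _].
    by rewrite /= rhs0 //; case: (k == i0).
  + apply/matrixP => k l; rewrite (ord1 l) !mxE.
    have -> : (\int[mu]_(s in `[0, t]) consensus_rhs Gm Qm Xs i0 s k 0) = \int[mu]_(s in `[0, t]) (if k == i0 then d0 else d1) s.
      by apply: eq_Rintegral => x xin; rewrite (heq k x xin).
    case: (ord2 k) => -> /=.
    * have hd : forall x, 0 <= x -> is_derive x 1 x0 (d0 x) by move=> x hx; apply: der_x0; lra.
      have hc : forall x, 0 <= x -> {for x, continuous d0} by move=> x hx; apply: cont_d0; lra.
      rewrite (FTC0 t0 hd hc); ring.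
    * have hd : forall x, 0 <= x -> is_derive x 1 x1 (d1 x) by move=> x hx; apply: der_x1; lra.
      have hc : forall x, 0 <= x -> {for x, continuous d1} by move=> x hx; apply: cont_d1; lra.
      rewrite (FTC0 t0 hd hc); ring.
- split.
  + move=> k; apply: (eq_integrable _ (cst 0)) => //.
    * by move=> x _; rewrite /= rhs1.
    * exact: integrable0.
  + apply/matrixP => k l; rewrite (ord1 l) !mxE.
    under eq_Rintegral do rewrite rhs1.
    by rewrite Rintegral_cst // mul0r /Xs /= addr0.
Qed.

Lemma cont_Qm (i j : 'I_2) (t : R) : {for t, continuous (fun x => Qm x i j)}.
Proof.
have ht : -1 < `|t| by have := normr_ge0 t; lra.
have [df h] := der_q i j ht.
change {for t, continuous ((fun x => Qf x i j) \o (fun x : R => `|x|))}.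
apply: continuous_comp; last exact: dcont h.
exact: (@norm_continuous _ R^o).
Qed.

Lemma meas_Q (i j : 'I_2) : measurable_fun setT (fun t => Qm t i j).
Proof. by apply: measurable_realfun.continuous_measurable_fun => t; exact: cont_Qm. Qed.

Lemma sum_neqR (F : 'I_2 -> R) (i : 'I_2) :
  \sum_(j | j != i) F j = F (if i == i0 then i1 else i0).
Proof.
rewrite big_mkcond big_ord_recr big_ord1 /=.
by case: (ord2 i) => ->; rewrite /=; [rewrite add0r | rewrite addr0]; congr F; apply/val_inj.
Qed.

Lemma Gm_ic : interconnection Gm /\ ic_connected Gm.
Proof.
split; [split|].
- move=> i j; case: (ord2 i) => ->; case: (ord2 j) => -> //= _; rewrite mxE //=; lra.
- move=> i; rewrite sum_neqR; case: (ord2 i) => -> /=; rewrite !mxE /=; lra.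
- exists i1 => i; case: (ord2 i) => ->; last exact: connect0.
  apply: connect1; rewrite /ic_edge mxE /=; lra.
Qed.

Lemma comp_le (v : 'cV[R]_2) : v i0 0 ^+ 2 + v i1 0 ^+ 2 = norm2 v ^+ 2.
Proof. by rewrite norm2_sq. Qed.

Lemma nosync : ~ synchronize Xs.
Proof.
move=> [xb hx].
have H : \forall t \near +oo, [/\ norm2 (Xs i0 t - xb t) < 1/4, norm2 (Xs i1 t - xb t) < 1/4 & 0 <= t].
  near=> t; split.
  - by near: t; apply: (cvgr_lt 0 (hx i0)); lra.
  - by near: t; apply: (cvgr_lt 0 (hx i1)); lra.
  - by near: t; apply: nbhs_pinfty_ge; exact: num_real.
have [t [ha hb hc]] := filter_ex H.
have e1 := comp_le (Xs i0 t - xb t); have e2 := comp_le (Xs i1 t - xb t).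
have n1 := norm2_ge0 (Xs i0 t - xb t); have n2 := norm2_ge0 (Xs i1 t - xb t).
move: e1 e2 n1 n2 ha hb.
rewrite !mxE /= /x0 /x1.
move: (norm2 (Xs i0 t - xb t)) (norm2 (Xs i1 t - xb t)) => N1 N2.
have hcs := cs_sn t; have hu := uu_bnd hc.
move: (cs t) (sn t) (uu t) (xb t i0 0) (xb t i1 0) hcs hu => c s u p q hcs /andP[u0 u1] e1 e2 n1 n2 ha hb.
have k1 : ((1 + u) * c) ^+ 2 + ((1 + u) * s) ^+ 2 >= 1.
  rewrite !exprMn -mulrDr hcs mulr1; nra.
have hN1 : N1 ^+ 2 < 1 / 16 by nra.
have hN2 : N2 ^+ 2 < 1 / 16 by nra.
have g1 : 0 <= ((1 + u) * c - p - p) ^+ 2 by exact: sqr_ge0.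
have g2 : 0 <= ((1 + u) * s - q - q) ^+ 2 by exact: sqr_ge0.
nra.
Unshelve. all: by end_near.
Qed.

Definition fPE (a b t : R) :=
  ((a ^+ 2 + b ^+ 2) * (cs t ^+ 2 + sn t ^+ 2) / 2
   + (b ^+ 2 - a ^+ 2) / 2 * (cs t ^+ 2 - sn t ^+ 2) - a * b * (2 * cs t * sn t)) / 4.
Definition XPE (a b c s : R) :=
  (b ^+ 2 - a ^+ 2) / 2 * ((c ^+ 2 - s ^+ 2) + (2 * c * s) / 2)
  - a * b * ((2 * c * s) - (c ^+ 2 - s ^+ 2) / 2).
Definition FPE (a b t : R) :=
  ((a ^+ 2 + b ^+ 2) * (cs t ^+ 2 + sn t ^+ 2) / 2 * t + 4 / 5 * (1 + t) * XPE a b (cs t) (sn t)) / 4.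

Lemma der_FPE (a b t : R) : -1 < t -> is_derive t 1 (FPE a b) (fPE a b t).
Proof.
move=> ht; eapply is_derive_eq.
  rewrite /FPE /XPE /cs /sn /th; repeat dtac2; side ht.
rewrite /fPE /cs /sn /th ?scaler0; have hu := uupos ht. field.
all: side ht.
Qed.

Lemma cont_fPE (a b t : R) : -1 < t -> {for t, continuous (fPE a b)}.
Proof.
move=> ht; have [df h] : exists df : R, is_derive t 1 (fPE a b) df.
  by eexists; rewrite /fPE /cs /sn /th; repeat dtac2; side ht.
exact: dcont h.
Qed.

Lemma XPE_bnd (a b c s : R) : a ^+ 2 + b ^+ 2 = 1 -> c ^+ 2 + s ^+ 2 = 1 ->
  - (9 / 16) <= XPE a b c s <= 9 / 16.
Proof.
move=> hab hcs.
set A := (b ^+ 2 - a ^+ 2) / 2; set B := a * b.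
set C2 := c ^+ 2 - s ^+ 2; set S2 := 2 * c * s.
have e : XPE a b c s = (A + B / 2) * C2 + (A / 2 - B) * S2 by rewrite /XPE -/A -/B -/C2 -/S2; field.
have hAB : A ^+ 2 + B ^+ 2 = 1 / 4.
  rewrite /A /B; transitivity ((a ^+ 2 + b ^+ 2) ^+ 2 / 4); first by field.
  by rewrite hab; field.
have hCS : C2 ^+ 2 + S2 ^+ 2 = 1.
  rewrite /C2 /S2; transitivity ((c ^+ 2 + s ^+ 2) ^+ 2); first by ring.
  by rewrite hcs expr1n.
have hX : (XPE a b c s) ^+ 2 <= 5 / 16.
  rewrite e.
  have id : ((A + B / 2) * C2 + (A / 2 - B) * S2) ^+ 2 + ((A + B / 2) * S2 - (A / 2 - B) * C2) ^+ 2
     = 5 / 4 * (A ^+ 2 + B ^+ 2) * (C2 ^+ 2 + S2 ^+ 2) by field.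
  have := sqr_ge0 ((A + B / 2) * S2 - (A / 2 - B) * C2).
  rewrite hAB hCS in id. lra.
move: hX; move: (XPE a b c s) => X hX.
apply/andP; split; nra.
Qed.

Lemma quad_mul (A : 'M[R]_2) (v : 'cV[R]_2) :
  (v^T *m A *m v) 0 0 = v i0 0 * (A *m v) i0 0 + v i1 0 * (A *m v) i1 0.
Proof. rewrite quad2 !mulmx2; ring. Qed.

Lemma sigma_lb (A : 'M[R]_2) (m : R) : 0 <= m ->
  (forall v : 'cV[R]_2, norm2 v = 1 -> m <= (v^T *m A *m v) 0 0) -> m <= sigma_min A.
Proof.
move=> m0 H; apply: lb_le_inf.
- pose e0 : 'cV[R]_2 := \col_k (k == i0)%:R.
  exists (norm2 (A *m e0)), e0 => //=.
  by rewrite /norm2 sum2 !mxE /= expr1n expr0n /= addr0 sqrtr1.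
- move=> y [v /= hv <-].
  have hq := H v hv; rewrite quad_mul in hq.
  have hn := norm2_sq (A *m v); have hv2 := norm2_sq v; rewrite hv expr1n in hv2.
  have nn := norm2_ge0 (A *m v).
  move: hq hn hv2 nn; move: (norm2 (A *m v)) ((A *m v) i0 0) ((A *m v) i1 0) (v i0 0) (v i1 0) => N p q a b hq hn hv2 nn.
  have id : (a * p + b * q) ^+ 2 + (a * q - b * p) ^+ 2 = (a ^+ 2 + b ^+ 2) * (p ^+ 2 + q ^+ 2) by ring.
  have := sqr_ge0 (a * q - b * p).
  rewrite -hv2 mul1r -hn in id.
  nra.
Qed.

Lemma cD f g x : {for x, continuous f} -> {for x, continuous g} -> {for x, continuous (fun t => f t + g t)}.
Proof. move=> hf hg; exact: continuousD. Qed.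
Lemma cM f g x : {for x, continuous f} -> {for x, continuous g} -> {for x, continuous (fun t => f t * g t)}.
Proof. move=> hf hg; exact: continuousM. Qed.
Lemma cK (k : R) x : {for x, continuous (fun _ : R => k)}.
Proof. exact: cst_continuous. Qed.

Lemma cQ1 (k : R) (i j : 'I_2) x : {for x, continuous (fun t => k * Qm t i j)}.
Proof. exact: (cM (@cK k x) (@cont_Qm i j x)). Qed.
Lemma cQ2 x : {for x, continuous (fun t => Qm t i0 i1 + Qm t i1 i0)}.
Proof. exact: (cD (@cont_Qm i0 i1 x) (@cont_Qm i1 i0 x)). Qed.
Lemma cQ3 (k : R) x : {for x, continuous (fun t => k * (Qm t i0 i1 + Qm t i1 i0))}.
Proof. exact: (cM (@cK k x) (@cQ2 x)). Qed.
Lemma cQ4 (a b : R) x : {for x, continuous (fun t => a ^+ 2 * Qm t i0 i0 + a * b * (Qm t i0 i1 + Qm t i1 i0))}.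
Proof. exact: (cD (@cQ1 (a ^+ 2) i0 i0 x) (@cQ3 (a * b) x)). Qed.
Lemma cQ5 (a b : R) x : {for x, continuous (fun t => a ^+ 2 * Qm t i0 i0 + a * b * (Qm t i0 i1 + Qm t i1 i0) + b ^+ 2 * Qm t i1 i1)}.
Proof. exact: (cD (@cQ4 a b x) (@cQ1 (b ^+ 2) i1 i1 x)). Qed.

Lemma PE (T : R) : 36 <= T -> T / 160 <= sigma_min (mx_integral Qm 0 T).
Proof.
move=> hT; apply: sigma_lb; first lra.
move=> v hv; rewrite quad2 !mxE.
have hab := norm2_sq v; rewrite hv expr1n in hab.
move: (v i0 0) (v i1 0) hab => a b hab.
have E : \int[mu]_(t in `[0, T]) (a ^+ 2 * Qm t i0 i0 + a * b * (Qm t i0 i1 + Qm t i1 i0) + b ^+ 2 * Qm t i1 i1)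
  = a ^+ 2 * \int[mu]_(t in `[0, T]) Qm t i0 i0 + a * b * (\int[mu]_(t in `[0, T]) Qm t i0 i1 + \int[mu]_(t in `[0, T]) Qm t i1 i0)
    + b ^+ 2 * \int[mu]_(t in `[0, T]) Qm t i1 i1.
  have iQ : forall (k : R) (i j : 'I_2), mu.-integrable `[0, T] (EFin \o (fun t => k * Qm t i j)).
    by move=> k i j; apply: cont_int => x _; exact: cQ1.
  have iQ' : forall (i j : 'I_2), mu.-integrable `[0, T] (EFin \o (fun t => Qm t i j)).
    by move=> i j; apply: cont_int => x _; exact: cont_Qm.
  have i01 : mu.-integrable `[0, T] (EFin \o (fun t => a * b * (Qm t i0 i1 + Qm t i1 i0))).
    by apply: cont_int => x _; exact: cQ3.
  have iA : mu.-integrable `[0, T] (EFin \o (fun t => a ^+ 2 * Qm t i0 i0 + a * b * (Qm t i0 i1 + Qm t i1 i0))).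
    by apply: cont_int => x _; exact: cQ4.
  rewrite (RintegralD _ iA (iQ (b ^+ 2) i1 i1)) //.
  rewrite (RintegralD _ (iQ (a ^+ 2) i0 i0) i01) //.
  rewrite (RintegralZl (a ^+ 2) _ (iQ' i0 i0)) // (RintegralZl (b ^+ 2) _ (iQ' i1 i1)) //.
  have i2 : mu.-integrable `[0, T] (EFin \o (fun t => Qm t i0 i1 + Qm t i1 i0)).
    by apply: cont_int => x _; exact: cQ2.
  by rewrite (RintegralZl (a * b) _ i2) // (RintegralD _ (iQ' i0 i1) (iQ' i1 i0)).
rewrite -E.
have hFT : T / 160 <= \int[mu]_(t in `[0, T]) fPE a b t.
  have hd : forall x, 0 <= x -> is_derive x 1 (FPE a b) (fPE a b x) by move=> x hx; apply: der_FPE; lra.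
  have hc : forall x, 0 <= x -> {for x, continuous (fPE a b)} by move=> x hx; apply: cont_fPE; lra.
  rewrite (FTC0 (le_trans _ hT) hd hc) //.
  have /andP[x1 x2] := XPE_bnd (esym hab) (cs_sn T).
  have /andP[y1 y2] := XPE_bnd (esym hab) (cs_sn 0).
  rewrite /FPE -hab !cs_sn.
  have hm : 0 <= (1 + T) * (XPE a b (cs T) (sn T) + 9 / 16) by apply: mulr_ge0; lra.
  nra.
apply: (le_trans hFT); apply: le_Rintegral => //.
- apply: cont_int => x hx; apply: cont_fPE; lra.
- apply: cont_int => x _; exact: cQ5.
- move=> t; rewrite /= in_itv /= => /andP[t0 _].
  rewrite /Qm ger0_norm // Qf00 Qf01 Qf10 Qf11.
  have hu := uu_bnd t0.
  apply: le_trans (core_psd _ _ _ _ hu).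
  by rewrite /fPE le_eqVlt; apply/orP; left; apply/eqP; field.
Qed.
End S.

Unset Implicit Arguments.
Theorem theorem7 (R : realType) :
  exists (p n : nat) (G : 'M[R]_p) (Q : R -> 'M[R]_n),
    [/\ interconnection G /\ ic_connected G,
        (forall t, Qbar (Q t)),
        (forall i j : 'I_n, measurable_fun setT (fun t => Q t i j)),
        liminf_pos (fun T => T^-1 * sigma_min (mx_integral Q 0 T)) &
        exists x : 'I_p -> R -> 'cV[R]_n,
          is_solution G Q x /\ ~ synchronize x].
Proof.
exists 2%N, 2%N, (@Gm R), (@Qm R); split.
- exact: Gm_ic.
- by move=> t; apply: Qbar_Qf; exact: normr_ge0.
- exact: meas_Q.
- exists (1 / 160); split; first lra.
  exists 36 => T hT.
  have h := PE hT.
  have -> : 1 / 160 = T^-1 * (T / 160) :> R.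
    by field; apply: lt0r_neq0; lra.
  by apply: ler_wpM2l => //; rewrite invr_ge0; lra.
- exists (@Xs R); split; [exact: sol | exact: nosync].
Qed.
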